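(* Let the Algorithm and assumptions (A1)–(A4) be as in the context, with constants $L_H,K_H,\delta_g,\delta_H,\nu$, and assume $\sigma_0\le2\gamma L_H$. Suppose the algorithm does not terminate at the $N$-th iteration and that for every iteration $k$, $\delta_g\le\frac{9\delta_H^2}{4\sigma_k}$ and \[ \delta_H\le\min\Big\{\min\{\tfrac1{18},\tfrac{1-\rho_{TH}}{9}\}\big(\sqrt{K_H^2+4\sigma_k\varepsilon_g}-K_H\big),\ \min\{\tfrac19,\tfrac{2(1-\rho_{TH})}{9}\}\nu\varepsilon_H\Big\}. \] Assume $f$ attains its minimum $f_{\min}$ over $\mathcal M$. Let $\mathcal N_{succ}$ be the set of successful iterations (those $k$ with $\rho_k\ge\rho_{TH}$) performed before termination. Then \[ |\mathcal N_{succ}|\le\frac{f(x_0)-f_{\min}}{\rho_{TH}\kappa_\sigma}\max\{\varepsilon_g^{-2},\varepsilon_H^{-3}\}+1, \qquad \kappa_\sigma:=\min\Big\{\frac{\nu^3}{24\gamma^2L_H^2},\ \frac1{2\sqrt3}\min\Big\{\frac1{K_H},\frac1{\sqrt{2\gamma L_H}}\Big\}\Big\}. \]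
   Context: Let $\mathcal M$ be a connected complete Riemannian manifold; $\langle\cdot,\cdot\rangle$ and $\|\cdot\|$ denote the inner product and norm on tangent spaces $T_x\mathcal M$. Let $f=\frac1n\sum_{i=1}^n f_i$ with each $f_i:\mathcal M\to\mathbb R$ twice continuously differentiable; $\mathrm{grad} f$ is the Riemannian gradient. A retraction is a smooth map $R:T\mathcal M\to\mathcal M$ whose restriction $R_x$ to $T_x\mathcal M$ satisfies $R_x(0_x)=x$, $DR_x(0_x)=\mathrm{Id}$. $\nabla^2 f\circ R_x(0_x)$ is the Hessian at $0_x$ of $f\circ R_x$ on the inner-product space $T_x\mathcal M$. $\lambda_{\min}(H)$ denotes the smallest eigenvalue of a self-adjoint operator $H$. Algorithm: fix $\varepsilon_g,\varepsilon_H,\rho_{TH}\in(0,1)$, $\gamma>1$, $x_0\in\mathcal M$, $\sigma_0>0$. At iteration $k$: construct $G_k\in T_{x_k}\mathcal M$ and self-adjoint linear $H_k$ on $T_{x_k}\mathcal M$; if $\|G_k\|\le\varepsilon_g$ and $\lambda_{\min}(H_k)\ge-\varepsilon_H$, stop; otherwise choose $\eta_k\in T_{x_k}\mathcal M$ approximately minimizing $m_k(\eta):=\langle G_k,\eta\rangle+\frac12\langle H_k[\eta],\eta\rangle+\frac13\sigma_k\|\eta\|^3$, set $\rho_k=\frac{f(x_k)-f\circ R_{x_k}(\eta_k)}{-m_k(\eta_k)}$; if $\rho_k\ge\rho_{TH}$ (successful iteration) set $x_{k+1}=R_{x_k}(\eta_k)$, $\sigma_{k+1}=\sigma_k/\gamma$,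 else (unsuccessful) $x_{k+1}=x_k$, $\sigma_{k+1}=\gamma\sigma_k$. Cauchy point and eigenpoint: $\eta_k^C:=-\alpha^C G_k$ with $\alpha^C\in\arg\min_{\alpha\ge0}m_k(-\alpha G_k)$. Fix $\nu\in(0,1)$. When $\lambda_{\min}(H_k)<0$, $\eta_k^E:=\alpha^E u_k$ where $u_k$ satisfies $\langle u_k,H_k[u_k]\rangle\le\nu\lambda_{\min}(H_k)\|u_k\|^2<0$ and $\langle G_k,u_k\rangle\le0$, and $\alpha^E\in\arg\min_{\alpha\ge0}m_k(\alpha u_k)$. Assumptions: (A1) there is $L_H>0$ with $\big|f\circ R_{x_k}(\eta_k)-f(x_k)-\langle\mathrm{grad} f(x_k),\eta_k\rangle-\frac12\langle\nabla^2 f\circ R_{x_k}(0_{x_k})[\eta_k],\eta_k\rangle\big|\le\frac12L_H\|\eta_k\|^3$ for all $k$. (A2) there is $K_H>0$ with $\|H_k\|:=\sup_{\|\eta\|\le1}\langle\eta,H_k[\eta]\rangle\le K_H$ for all $k$. (A3) there are $\delta_g,\delta_H\in(0,1)$ with $\|G_k-\mathrm{grad} f(x_k)\|\le\delta_g$ and $\|(H_k-\nabla^2 f\circ R_{x_k}(0_{x_k}))[\eta_k]\|\le\delta_H\|\eta_k\|$ for all $k$. (A4) for all $k$, $-m_k(\eta_k)\ge-m_k(\eta_k^C)$, and $-m_k(\eta_k)\ge-m_k(\eta_k^E)$ whenever $\lambda_{\min}(H_k)<0$. *)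

(* Defs.v *)
From HB Require Import structures.
From mathcomp Require Import all_boot all_order all_algebra.
From mathcomp Require Import all_classical all_reals all_analysis.
Set Implicit Arguments. Unset Strict Implicit. Unset Printing Implicit Defensive.
Import Order.TTheory GRing.Theory Num.Theory.
Import numFieldNormedType.Exports.
Local Open Scope classical_set_scope.
Local Open Scope ring_scope.

(* Tangent spaces T_x M are represented in orthonormal coordinates as 'rV[R]_d
   with the Euclidean inner product; self-adjoint operators are symmetric
   matrices acting by  A[v] := v *m A^T  (row-vector convention). *)
Section Defs.
Context {R : realType} {d : nat}.

Definition dotv (u v : 'rV[R]_d) : R := (u *m v^T) 0 0.
Definition enorm (u : 'rV[R]_d) : R := Num.sqrt (dotv u u).
Definition opapp (A : 'M[R]_d) (v : 'rV[R]_d) : 'rV[R]_d := v *m A^T.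
Definition qform (A : 'M[R]_d) (v : 'rV[R]_d) : R := dotv (opapp A v) v.
Definition lam_min (A : 'M[R]_d) : R := inf [set a | eigenvalue A a].
Definition opnorm (A : 'M[R]_d) : R :=
  sup [set qform A e | e in [set e | enorm e <= 1]].

Definition unitv (i : 'I_d) : 'rV[R]_d := delta_mx 0 i.
Definition grad0 (g : 'rV[R]_d -> R) : 'rV[R]_d :=
  \row_i derive g 0 (unitv i).
Definition hess0 (g : 'rV[R]_d -> R) : 'M[R]_d :=
  \matrix_(i, j) derive (fun w => derive g w (unitv i)) 0 (unitv j).
Definition C2 (g : 'rV[R]_d -> R) : Prop :=
  (forall v, differentiable g v) /\
  (forall i v, differentiable (fun w => derive g w (unitv i)) v) /\
  (forall i j, continuous
     (fun w => derive (fun u => derive g u (unitv i)) w (unitv j))).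

Definition cmodel (G : 'rV[R]_d) (H : 'M[R]_d) (sigma : R) (eta : 'rV[R]_d) : R :=
  dotv G eta + 2^-1 * qform H eta + sigma / 3 * enorm eta ^+ 3.

Definition is_argmin_ray (G : 'rV[R]_d) (H : 'M[R]_d) (sigma : R)
  (u : 'rV[R]_d) (alpha : R) : Prop :=
  0 <= alpha /\ forall beta, 0 <= beta ->
    cmodel G H sigma (alpha *: u) <= cmodel G H sigma (beta *: u).

End Defs.

Definition favg {R : realType} {M : Type} (n : nat) (fs : 'I_n -> M -> R) (y : M) : R :=
  (n%:R)^-1 * \sum_(i < n) fs i y.

(* Main.v *)
Require Import Defs.
From HB Require Import structures.
From mathcomp Require Import all_boot all_order all_algebra.
From mathcomp Require Import all_classical all_reals all_analysis.
From mathcomp Require Import ring lra.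
Import Order.TTheory GRing.Theory Num.Theory.
Import numFieldNormedType.Exports.
Local Open Scope classical_set_scope.
Local Open Scope ring_scope.

Set Implicit Arguments. Unset Strict Implicit.


Section Vec.
Variables (R : realType) (d : nat).
Implicit Types (u v w : 'rV[R]_d) (A B : 'M[R]_d).

Lemma dotvE u v : dotv u v = \sum_j u 0 j * v 0 j.
Proof. by rewrite /dotv !mxE; apply: eq_bigr => j _; rewrite mxE. Qed.

Lemma dotvC u v : dotv u v = dotv v u.
Proof. by rewrite !dotvE; apply: eq_bigr => j _; rewrite mulrC. Qed.

Lemma dotvDl u w v : dotv (u + w) v = dotv u v + dotv w v.
Proof. by rewrite !dotvE -big_split; apply: eq_bigr => j _; rewrite mxE mulrDl. Qed.

Lemma dotvNl u v : dotv (- u) v = - dotv u v.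
Proof. by rewrite !dotvE -sumrN; apply: eq_bigr => j _; rewrite mxE mulNr. Qed.

Lemma dotvBl u w v : dotv (u - w) v = dotv u v - dotv w v.
Proof. by rewrite dotvDl dotvNl. Qed.

Lemma dotvZl a u v : dotv (a *: u) v = a * dotv u v.
Proof. by rewrite !dotvE mulr_sumr; apply: eq_bigr => j _; rewrite mxE mulrA. Qed.

Lemma dotvZr a u v : dotv u (a *: v) = a * dotv u v.
Proof. by rewrite dotvC dotvZl dotvC. Qed.

Lemma dotv_ge0 u : 0 <= dotv u u.
Proof. by rewrite dotvE; apply: sumr_ge0 => j _; rewrite -expr2 sqr_ge0. Qed.

Lemma dotv_eq0 u : dotv u u = 0 -> u = 0.
Proof.
rewrite dotvE => /eqP; rewrite psumr_eq0; last by move=> j _; rewrite -expr2 sqr_ge0.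
move=> /allP h; apply/rowP => j; rewrite mxE.
have := h j (mem_index_enum j); rewrite /= mulf_eq0 orbb => /eqP ->. by [].
Qed.

Lemma enorm_ge0 u : 0 <= enorm u.
Proof. exact: sqrtr_ge0. Qed.

Lemma enorm_sq u : enorm u ^+ 2 = dotv u u.
Proof. by rewrite /enorm sqr_sqrtr // dotv_ge0. Qed.

Lemma enormZ a u : 0 <= a -> enorm (a *: u) = a * enorm u.
Proof.
move=> a0; rewrite /enorm dotvZl dotvZr mulrA -expr2 sqrtrM ?sqr_ge0 //.
by rewrite sqrtr_sqr ger0_norm.
Qed.

Lemma enorm_eq0 u : enorm u = 0 -> u = 0.
Proof. by move=> h; apply: dotv_eq0; rewrite -enorm_sq h expr0n. Qed.

Lemma dotv_cs u v : dotv u v <= enorm u * enorm v.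
Proof.
have key : forall a b, 0 <= a -> 0 <= b ->
   0 <= dotv (a *: u - b *: v) (a *: u - b *: v) by move=> *; apply: dotv_ge0.
have E : forall a b, dotv (a *: u - b *: v) (a *: u - b *: v) =
   a^+2 * dotv u u - 2 * a * b * dotv u v + b ^+ 2 * dotv v v.
  move=> a b; rewrite !dotvBl ![dotv _ (_ - _)]dotvC !dotvBl !dotvZl !dotvZr.
  rewrite (dotvC v u); ring.
have [u0|] := eqVneq (enorm u) 0.
  rewrite (enorm_eq0 u0) dotvC dotvE big1 ?mul0r ?mulr_ge0 ?enorm_ge0 // => j _; by rewrite mxE mulr0.
have [v0|] := eqVneq (enorm v) 0.
  rewrite (enorm_eq0 v0) dotvE big1 ?mul0r ?mulr_ge0 ?enorm_ge0 // => j _; by rewrite mxE mulr0.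
move=> nv nu.
have pu : 0 < enorm u by rewrite lt0r nu enorm_ge0.
have pv : 0 < enorm v by rewrite lt0r nv enorm_ge0.
have := key (enorm v) (enorm u) (ltW pv) (ltW pu).
rewrite E -!enorm_sq => h.
have : (2 * enorm u * enorm v) * dotv u v <= (2 * enorm u * enorm v) * (enorm u * enorm v) by nra.
by rewrite ler_pM2l //; apply: mulr_gt0 => //; apply: mulr_gt0.
Qed.

Lemma opappZ A a v : opapp A (a *: v) = a *: opapp A v.
Proof. by rewrite /opapp scalemxAl. Qed.

Lemma opappB A B v : opapp (A - B) v = opapp A v - opapp B v.
Proof. by rewrite /opapp linearB /= mulmxBr. Qed.

Lemma qformZ A a v : qform A (a *: v) = a ^+ 2 * qform A v.
Proof. by rewrite /qform opappZ dotvZl dotvZr mulrA expr2. Qed.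

Lemma qformB A B v : qform A v - qform B v = dotv (opapp (A - B) v) v.
Proof. by rewrite /qform opappB dotvBl. Qed.

Lemma cmodelZ G H s a v : 0 <= a ->
  cmodel G H s (a *: v) = a * dotv G v + 2^-1 * (a ^+ 2 * qform H v)
     + s / 3 * (a * enorm v) ^+ 3.
Proof. by move=> a0; rewrite /cmodel dotvZr qformZ enormZ. Qed.


Lemma coord_le1 u j : enorm u <= 1 -> `|u 0 j| <= 1.
Proof.
move=> h.
have h2 : dotv u u <= 1.
  by rewrite -enorm_sq -(expr1n R 2); rewrite ler_pXn2r ?nnegrE ?enorm_ge0.
have : u 0 j ^+ 2 <= dotv u u.
  rewrite dotvE (bigD1 j) //= expr2 lerDl; apply: sumr_ge0 => i _.
  by rewrite -expr2 sqr_ge0.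
move=> h3; rewrite -(expr1n R 2) in h2.
have : `|u 0 j| ^+ 2 <= 1 ^+ 2 by rewrite real_normK ?num_real //; apply: le_trans h3 h2.
by rewrite ler_pXn2r ?nnegrE.
Qed.

Lemma qform_bounded A : has_ubound [set qform A e | e in [set e | enorm e <= 1]].
Proof.
exists (\sum_j \sum_i `|A j i|) => _ [e /= he <-].
rewrite /qform dotvE; apply: (le_trans (ler_norm _)).
apply: (le_trans (ler_norm_sum _ _ _)); apply: ler_sum => j _.
rewrite normrM; apply: (@le_trans _ _ (`|opapp A e 0 j| * 1)).
  by apply: ler_wpM2l => //; apply: coord_le1.
rewrite mulr1 /opapp mxE; apply: (le_trans (ler_norm_sum _ _ _)).
apply: ler_sum => i _; rewrite mxE normrM.
apply: (@le_trans _ _ (1 * `|A j i|)); last by rewrite mul1r.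
by apply: ler_wpM2r => //; apply: coord_le1.
Qed.

Lemma qform0 A : qform A 0 = 0.
Proof. by rewrite /qform /opapp mul0mx dotvE big1 // => j _; rewrite mxE mul0r. Qed.

Lemma qform_le A K v : opnorm A <= K -> qform A v <= K * enorm v ^+ 2.
Proof.
move=> hK.
have [v0|nv] := eqVneq (enorm v) 0.
  rewrite (enorm_eq0 v0) qform0 enorm_sq dotvE big1 ?mulr0 // => j _; by rewrite mxE mul0r.
have pv : 0 < enorm v by rewrite lt0r nv enorm_ge0.
set e := (enorm v)^-1 *: v.
have ve : v = enorm v *: e by rewrite /e scalerA divff // scale1r.
have he : enorm e = 1 by rewrite /e enormZ ?invr_ge0 ?enorm_ge0 // mulVf.
have : qform A e <= K.
  apply: le_trans hK; apply: ub_le_sup; first exact: qform_bounded.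
  by exists e => //=; rewrite he.
move=> h; have -> : qform A v = enorm v ^+ 2 * qform A e by rewrite {1}ve qformZ.
rewrite [K * _]mulrC; apply: ler_wpM2l => //; exact: sqr_ge0.
Qed.


End Vec.


Lemma poly16 (R : realFieldType) (x y : R) : 0 <= x -> 0 <= y ->
  27 * x^+2 * y + 6 * x * y^+2 - y^+3 <= 192 * x^+3.
Proof.
move=> hx hy.
have h1 : 0 <= (y - 5 * x)^+2 * (y + 2 * x).
  apply: mulr_ge0; [exact: sqr_ge0| lra].
have h2 : 0 <= (y - 8 * x)^+2 * x by apply: mulr_ge0; [exact: sqr_ge0| lra].
have h3 : 0 <= x ^+ 3 by apply: exprn_ge0.
have -> : 192 * x^+3 = 27 * x^+2 * y + 6 * x * y^+2 - y^+3 +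
   ((y - 5 * x)^+2 * (y + 2 * x) + 2 * ((y - 8 * x)^+2 * x) + 14 * x ^+ 3) by ring.
lra.
Qed.

Section RealLem.
Variable R : rcfType.
Implicit Types (s K e g a mm L dH dg rho nu l S : R).

Lemma cauchy_succ s K e g mm : 0 < s -> 0 < K -> 0 < e -> e < g ->
  (forall r, 0 <= r -> r * g - K * r ^+ 2 / 2 - s * r ^+ 3 / 3 <= mm) ->
  (Num.sqrt (K ^+ 2 + 4 * s * e) - K) ^+ 3 / 12 <= s ^+ 2 * mm.
Proof.
move=> s0 K0 e0 eg h.
set a := Num.sqrt (K ^+ 2 + 4 * s * e) - K.
have hq : (a + K) ^+ 2 = K ^+ 2 + 4 * s * e.
  rewrite /a subrK sqr_sqrtr //; apply: addr_ge0; [exact: sqr_ge0| nra].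
have a0 : 0 <= a.
  have : Num.sqrt (K ^+ 2) <= Num.sqrt (K ^+ 2 + 4 * s * e).
    by apply: ler_wsqrtr; rewrite lerDl; nra.
  by rewrite sqrtr_sqr ger0_norm ?(ltW K0) // /a subr_ge0.
have := h (a / (2 * s)) (divr_ge0 a0 (ltW (mulr_gt0 (ltr0n _ 2) s0))).
have sr : s * (a / (2 * s)) = a / 2 by field; rewrite gt_eqF.
set r := a / (2 * s) => hr.
have E : s ^+ 2 * (r * g - K * r ^+ 2 / 2 - s * r ^+ 3 / 3) =
   (s * r) * s * g - K * (s * r) ^+ 2 / 2 - (s * r) ^+ 3 / 3 by field.
have : s ^+ 2 * (r * g - K * r ^+ 2 / 2 - s * r ^+ 3 / 3) <= s ^+ 2 * mm.
  by rewrite ler_pM2l ?exprn_gt0.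
rewrite E sr => h2; apply: le_trans h2.
have : a * s * e <= a * s * g by apply: ler_wpM2l; nra.
nra.
Qed.

Lemma eig_dec_succ nu e l mm rho dH s : 0 < nu -> 0 < e -> e < l -> 0 < s ->
  0 < rho < 1 -> 0 <= dH ->
  nu ^+ 3 * l ^+ 3 / 6 <= s ^+ 2 * mm ->
  dH <= Num.min (9^-1) (2 * (1 - rho) / 9) * nu * e ->
  16 * dH ^+ 3 <= (1 - rho) * (s ^+ 2 * mm).
Proof.
move=> nu0 e0 el s0 /andP[r0 r1] dH0 hm hd.
set c := Num.min _ _ in hd.
have c1 : c <= 9^-1 by rewrite /c ge_min lexx.
have c2 : c <= 2 * (1 - rho) / 9 by rewrite /c ge_min lexx orbT.
have c0 : 0 <= c by rewrite /c le_min; apply/andP; split; lra.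
have h3 : dH ^+ 3 <= (c * nu * e) ^+ 3 by rewrite ler_pXn2r // nnegrE; nra.
have ne : 0 <= nu * e by nra.
have h4 : (c * nu * e) ^+ 3 <= (81^-1 * (2 * (1 - rho) / 9)) * (nu * e) ^+ 3.
  have -> : (c * nu * e) ^+ 3 = (c * c * c) * (nu * e) ^+ 3 by ring.
  apply: ler_wpM2r; first exact: exprn_ge0.
  have hcc : c * c <= 9^-1 * 9^-1 by apply: ler_pM.
  have -> : 81^-1 = 9^-1 * 9^-1 :> R by field.
  by apply: ler_pM => //; apply: mulr_ge0.
have h5 : (nu * e) ^+ 3 <= (nu * l) ^+ 3.
  rewrite ler_pXn2r ?nnegrE; try nra.
  all: try (apply: mulr_ge0; lra).
  all: try done.
rewrite exprMn in h5 hm.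
have : (1 - rho) * (nu ^+ 3 * l ^+ 3 / 6) <= (1 - rho) * (s ^+ 2 * mm) by apply: ler_wpM2l; lra.
have : 0 <= (nu * e) ^+ 3 by exact: exprn_ge0.
rewrite exprMn; nra.
Qed.


Lemma cauchy_dec_succ a mm rho dH s : 0 <= a ->
  0 < rho < 1 -> 0 <= dH ->
  a ^+ 3 / 12 <= s ^+ 2 * mm ->
  dH <= Num.min (18^-1) ((1 - rho) / 9) * a ->
  16 * dH ^+ 3 <= (1 - rho) * (s ^+ 2 * mm).
Proof.
move=> a0 /andP[r0 r1] dH0 hm hd.
set c := Num.min _ _ in hd.
have c1 : c <= 18^-1 by rewrite /c ge_min lexx.
have c2 : c <= (1 - rho) / 9 by rewrite /c ge_min lexx orbT.
have c0 : 0 <= c by rewrite /c le_min; apply/andP; split; lra.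
have h3 : dH ^+ 3 <= (c * a) ^+ 3.
  rewrite ler_pXn2r ?nnegrE; try nra.
  all: try (apply: mulr_ge0; lra).
  all: try done.
have h4 : (c * a) ^+ 3 <= (324^-1 * ((1 - rho) / 9)) * a ^+ 3.
  have -> : (c * a) ^+ 3 = (c * c * c) * a ^+ 3 by ring.
  apply: ler_wpM2r; first exact: exprn_ge0.
  have hcc : c * c <= 18^-1 * 18^-1 by apply: ler_pM.
  have -> : 324^-1 = 18^-1 * 18^-1 :> R by field.
  by apply: ler_pM => //; apply: mulr_ge0.
have : (1 - rho) * (a ^+ 3 / 12) <= (1 - rho) * (s ^+ 2 * mm) by apply: ler_wpM2l; lra.
have : 0 <= a ^+ 3 by exact: exprn_ge0.
nra.
Qed.

Lemma err_bound L s dg dH r : 0 < s -> 2 * L <= s -> 0 <= dH -> 0 <= r ->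
  dg <= 9 * dH ^+ 2 / (4 * s) ->
  s ^+ 2 * (L / 2 * r ^+ 3 + dg * r + dH * r ^+ 2 / 2 - s / 3 * r ^+ 3)
    <= 16 * dH ^+ 3.
Proof.
move=> s0 hL dH0 r0 hdg.
have hy : 0 <= s * r by apply: mulr_ge0 => //; exact: ltW.
have P := @poly16 R _ _ dH0 hy.
have h1 : s ^+ 2 * (dg * r) <= 9 * dH ^+ 2 * (s * r) / 4.
  have : s ^+ 2 * r * dg <= s ^+ 2 * r * (9 * dH ^+ 2 / (4 * s)).
    by apply: ler_wpM2l => //; apply: mulr_ge0 => //; exact: sqr_ge0.
  have -> : s ^+ 2 * r * (9 * dH ^+ 2 / (4 * s)) = 9 * dH ^+ 2 * (s * r) / 4.
    by field; rewrite gt_eqF.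
  by move=> h; apply: le_trans h; rewrite le_eqVlt; apply/orP; left; apply/eqP; ring.
have h2 : s ^+ 2 * (L / 2 * r ^+ 3) <= (s * r) ^+ 3 / 4.
  have -> : (s * r) ^+ 3 / 4 = s ^+ 2 * (s / 2 / 2 * r ^+ 3) by field.
  apply: ler_wpM2l; first exact: sqr_ge0.
  apply: ler_wpM2r; first exact: exprn_ge0.
  lra.
have -> : s ^+ 2 * (L / 2 * r ^+ 3 + dg * r + dH * r ^+ 2 / 2 - s / 3 * r ^+ 3)
  = s ^+ 2 * (L / 2 * r ^+ 3) + s ^+ 2 * (dg * r) + dH * (s * r) ^+ 2 / 2
    - (s * r) ^+ 3 / 3 by ring.
lra.
Qed.


Lemma cauchy_dec K S s e g mm : 0 < K -> 0 < S -> 0 < s -> s <= S ->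
  0 < e -> e <= 1 -> e < g ->
  (forall r, 0 <= r -> r * g - K * r ^+ 2 / 2 - s * r ^+ 3 / 3 <= mm) ->
  (2 * Num.sqrt 3)^-1 * Num.min (K^-1) ((Num.sqrt S)^-1) * e ^+ 2 <= mm.
Proof.
move=> K0 S0 s0 sS e0 e1 eg h.
set m0 := Num.min _ _.
have sq0 : 0 < Num.sqrt S by rewrite sqrtr_gt0.
have m00 : 0 < m0 by rewrite /m0 lt_min invr_gt0 K0 invr_gt0 sq0.
have m1 : m0 <= K^-1 by rewrite /m0 ge_min lexx.
have m2 : m0 <= (Num.sqrt S)^-1 by rewrite /m0 ge_min lexx orbT.
have Km : K * m0 <= 1.
  by rewrite -(divff (lt0r_neq0 K0)); apply: ler_wpM2l => //; exact: ltW.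
have Sm : S * m0 ^+ 2 <= 1.
  have : m0 ^+ 2 <= (Num.sqrt S)^-1 ^+ 2 by rewrite ler_pXn2r // ?nnegrE ltW // invr_gt0.
  rewrite exprVn sqr_sqrtr ?(ltW S0) // => hm.
  rewrite -(divff (lt0r_neq0 S0)); apply: ler_wpM2l => //; exact: ltW.
have r0 : 0 <= m0 * e / 2 by apply: divr_ge0 => //; apply: mulr_ge0; exact: ltW.
have := h _ r0.
set r := m0 * e / 2 => hr.
have h1 : r * e <= r * g by apply: ler_wpM2l => //; exact: ltW.
have h2 : s * r ^+ 3 <= S * r ^+ 3 by apply: ler_wpM2r => //; exact: exprn_ge0.
have h3 : m0 * e ^+ 2 / 3 <= r * e - K * r ^+ 2 / 2 - S * r ^+ 3 / 3.
  have -> : r * e - K * r ^+ 2 / 2 - S * r ^+ 3 / 3 =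
     m0 * e ^+ 2 / 2 - (K * m0) * (m0 * e ^+ 2) / 8 - (S * m0 ^+ 2) * (m0 * e ^+ 3) / 24.
    by rewrite /r; field.
  have p1 : 0 <= m0 * e ^+ 2 by apply: mulr_ge0; [exact: ltW| exact: sqr_ge0].
  have p2 : 0 <= m0 * e ^+ 3 by apply: mulr_ge0; [exact: ltW| apply: exprn_ge0; exact: ltW].
  have p3 : m0 * e ^+ 3 <= m0 * e ^+ 2.
    apply: ler_wpM2l; first exact: ltW.
    rewrite exprS; apply: (@le_trans _ _ (1 * e ^+ 2)); last by rewrite mul1r.
    by apply: ler_wpM2r => //; exact: sqr_ge0.
  have q1 : (K * m0) * (m0 * e ^+ 2) <= m0 * e ^+ 2.
    by apply: (@le_trans _ _ (1 * (m0 * e ^+ 2))); [exact: ler_wpM2r| rewrite mul1r].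
  have q2 : (S * m0 ^+ 2) * (m0 * e ^+ 3) <= m0 * e ^+ 2.
    apply: le_trans p3.
    by apply: (@le_trans _ _ (1 * (m0 * e ^+ 3))); [exact: ler_wpM2r| rewrite mul1r].
  lra.
have hc : (2 * Num.sqrt 3)^-1 <= 3^-1 :> R.
  rewrite lef_pV2 ?posrE ?mulr_gt0 ?sqrtr_gt0 //.
  have : Num.sqrt (9/4) <= Num.sqrt 3 :> R by apply: ler_wsqrtr; lra.
  have -> : 9 / 4 = (3 / 2) ^+ 2 :> R by field.
  rewrite sqrtr_sqr ger0_norm; lra.
have : (2 * Num.sqrt 3)^-1 * m0 * e ^+ 2 <= 3^-1 * m0 * e ^+ 2.
  apply: ler_wpM2r; first exact: sqr_ge0.
  apply: ler_wpM2r; first exact: ltW.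
  exact: hc.
lra.
Qed.

Lemma eig_dec nu l e s S mm : 0 < nu -> 0 < e -> e < l -> 0 < s -> s <= S ->
  nu ^+ 3 * l ^+ 3 / 6 <= s ^+ 2 * mm ->
  nu ^+ 3 / (6 * S ^+ 2) * e ^+ 3 <= mm.
Proof.
move=> nu0 e0 el s0 sS hm.
have h1 : e ^+ 3 <= l ^+ 3 by rewrite ler_pXn2r // ?nnegrE; apply: ltW => //; apply: lt_trans el.
have h2 : s ^+ 2 <= S ^+ 2 by rewrite ler_pXn2r // ?nnegrE; apply: ltW => //; apply: lt_le_trans sS.
have S0 : 0 < S by apply: lt_le_trans sS.
have mm0 : 0 <= mm.
  have : 0 <= s ^+ 2 * mm.
    apply: le_trans hm; apply: divr_ge0 => //; apply: mulr_ge0; apply: exprn_ge0; try exact: ltW.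
    by apply: ltW; apply: lt_trans el.
  by rewrite pmulr_rge0 // exprn_gt0.
have n3 : 0 < nu ^+ 3 by exact: exprn_gt0.
rewrite mulrAC ler_pdivrMr ?mulr_gt0 ?exprn_gt0 //.
apply: (@le_trans _ _ (nu ^+ 3 * l ^+ 3)).
  by apply: ler_wpM2l => //; exact: ltW.
have : 6 * (s ^+ 2 * mm) <= 6 * (S ^+ 2 * mm) by apply: ler_wpM2l => //; apply: ler_wpM2r.
nra.
Qed.

End RealLem.


Section It.
Variables (R : realType) (d : nat).
Implicit Types (u v w G g eta : 'rV[R]_d) (A B H Hs : 'M[R]_d).

Lemma dotvNr u v : dotv u (- v) = - dotv u v.
Proof. by rewrite dotvC dotvNl dotvC. Qed.

Lemma enormN u : enorm (- u) = enorm u.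
Proof. by rewrite /enorm dotvNl dotvNr opprK. Qed.

Lemma qformN A u : qform A (- u) = qform A u.
Proof. by rewrite -scaleN1r qformZ expr2 mulrNN mulr1 mul1r. Qed.

Lemma cauchy_vec G H s K eta : 0 < s -> opnorm H <= K -> 0 < enorm G ->
  (exists alphaC, is_argmin_ray G H s (- G) alphaC /\
       - cmodel G H s (alphaC *: (- G)) <= - cmodel G H s eta) ->
  forall r, 0 <= r -> r * enorm G - K * r ^+ 2 / 2 - s * r ^+ 3 / 3
     <= - cmodel G H s eta.
Proof.
move=> s0 hK g0 [aC [[aC0 hmin] hle]] r r0.
have b0 : 0 <= r / enorm G by apply: divr_ge0 => //; exact: ltW.
apply: le_trans hle.
have hb : - cmodel G H s ((r / enorm G) *: - G) <= - cmodel G H s (aC *: - G).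
  by rewrite lerN2; exact: hmin.
apply: le_trans hb.
rewrite cmodelZ // dotvNr enormN qformN -enorm_sq.
have hq := qform_le G hK.
have -> : r / enorm G * enorm G = r by rewrite divfK // gt_eqF.
have : (r / enorm G) ^+ 2 * qform H G <= (r / enorm G) ^+ 2 * (K * enorm G ^+ 2).
  by apply: ler_wpM2l => //; exact: sqr_ge0.
have -> : (r / enorm G) ^+ 2 * (K * enorm G ^+ 2) = K * r ^+ 2.
  by field; rewrite gt_eqF.
have -> : r / enorm G * - enorm G ^+ 2 = - (r * enorm G).
  by field; rewrite gt_eqF.
lra.
Qed.

Lemma eig_vec G H s nu lam eta u alphaE : 0 < s -> 0 < nu -> lam < 0 ->
  qform H u <= nu * lam * enorm u ^+ 2 ->
  nu * lam * enorm u ^+ 2 < 0 ->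
  dotv G u <= 0 ->
  is_argmin_ray G H s u alphaE ->
  - cmodel G H s (alphaE *: u) <= - cmodel G H s eta ->
  nu ^+ 3 * (- lam) ^+ 3 / 6 <= s ^+ 2 * (- cmodel G H s eta).
Proof.
move=> s0 nu0 l0 hq hneg hG [aE0 hmin] hle.
have u0 : 0 < enorm u.
  rewrite lt0r enorm_ge0 andbT; apply/eqP => h; move: hneg; rewrite h expr0n /= mulr0.
  by rewrite ltxx.
set l := - lam.
have l0' : 0 < l by rewrite /l oppr_gt0.
set b := nu * l / (s * enorm u).
have b0 : 0 <= b by apply: divr_ge0; [apply: mulr_ge0; exact: ltW| apply: mulr_ge0; exact: ltW].
have h1 := hmin _ b0.
rewrite cmodelZ // in h1.
have hbs : b * enorm u = nu * l / s by rewrite /b; field; rewrite ?gt_eqF.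
rewrite hbs in h1.
have h2 : b * dotv G u <= 0 by rewrite mulr_ge0_le0.
have h3 : b ^+ 2 * qform H u <= b ^+ 2 * (nu * lam * enorm u ^+ 2).
  by apply: ler_wpM2l => //; exact: sqr_ge0.
have E3 : b ^+ 2 * (nu * lam * enorm u ^+ 2) = - (nu * l) * (nu * l / s) ^+ 2.
  by rewrite -hbs /l; ring.
rewrite E3 in h3.
have h4 : cmodel G H s eta <= - (nu * l) * (nu * l / s) ^+ 2 / 2 + s / 3 * (nu * l / s) ^+ 3.
  rewrite lerN2 in hle.

  lra.
have : s ^+ 2 * (nu * l * (nu * l / s) ^+ 2 / 2 - s / 3 * (nu * l / s) ^+ 3)
   <= s ^+ 2 * (- cmodel G H s eta).
  by apply: ler_wpM2l; [exact: sqr_ge0| lra].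
have -> : s ^+ 2 * (nu * l * (nu * l / s) ^+ 2 / 2 - s / 3 * (nu * l / s) ^+ 3)
   = nu ^+ 3 * l ^+ 3 / 6 by field; rewrite gt_eqF.
by [].
Qed.

Lemma err_vec G H g Hs s eta fx fR L dg dH :
  `| fR - fx - dotv g eta - 2^-1 * qform Hs eta | <= 2^-1 * L * enorm eta ^+ 3 ->
  enorm (G - g) <= dg ->
  enorm (opapp (H - Hs) eta) <= dH * enorm eta ->
  fR - fx - cmodel G H s eta <=
  L / 2 * enorm eta ^+ 3 + dg * enorm eta + dH * enorm eta ^+ 2 / 2
    - s / 3 * enorm eta ^+ 3.
Proof.
move=> h1 h2 h3.
have E : fR - fx - cmodel G H s eta =
  (fR - fx - dotv g eta - 2^-1 * qform Hs eta) + dotv (G - g) (- eta)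
  + 2^-1 * dotv (opapp (H - Hs) eta) (- eta) - s / 3 * enorm eta ^+ 3.
  rewrite /cmodel !dotvNr dotvBl -qformB; ring.
rewrite E.
have c1 := dotv_cs (G - g) (- eta).
have c2 := dotv_cs (opapp (H - Hs) eta) (- eta).
rewrite enormN in c1 c2.
have r0 := enorm_ge0 eta.
have d1 : enorm (G - g) * enorm eta <= dg * enorm eta by apply: ler_wpM2r.
have d2 : enorm (opapp (H - Hs) eta) * enorm eta <= dH * enorm eta * enorm eta by apply: ler_wpM2r.
have a1 := ler_norm (fR - fx - dotv g eta - 2^-1 * qform Hs eta).
have -> : dH * enorm eta ^+ 2 / 2 = 2^-1 * (dH * enorm eta * enorm eta) by rewrite expr2; field.
have -> : L / 2 * enorm eta ^+ 3 = 2^-1 * L * enorm eta ^+ 3 by field.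
lra.
Qed.

End It.

Unset Implicit Arguments. Set Strict Implicit.


Theorem lemma3p8
  (R : realType) (d : nat) (M : Type) (n : nat) (fs : 'I_n -> M -> R)
  (Retr : M -> 'rV[R]_d -> M)
  (eps_g eps_H rho_TH gamma sigma0 nu L_H K_H delta_g delta_H : R)
  (x0 : M) (x : nat -> M) (sigma : nat -> R)
  (G : nat -> 'rV[R]_d) (H : nat -> 'M[R]_d) (eta : nat -> 'rV[R]_d)
  (N : nat) (fmin : R) :
  (0 < n)%N ->
  (forall y, Retr y 0 = y) ->
  (forall i y, C2 (fun v => fs i (Retr y v))) ->
  0 < eps_g < 1 -> 0 < eps_H < 1 -> 0 < rho_TH < 1 -> 1 < gamma ->
  0 < sigma0 -> 0 < nu < 1 ->
  0 < L_H -> 0 < K_H -> 0 < delta_g < 1 -> 0 < delta_H < 1 ->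
  sigma0 <= 2 * gamma * L_H ->
  x 0%N = x0 -> sigma 0%N = sigma0 ->
  let f := favg fs in
  let rho k := (f (x k) - f (Retr (x k) (eta k)))
                 / (- cmodel (G k) (H k) (sigma k) (eta k)) in
  (* the algorithm runs iterations 0..N without terminating *)
  (forall k, (k <= N)%N ->
     (H k)^T = H k /\
     ~ (enorm (G k) <= eps_g /\ - eps_H <= lam_min (H k)) /\
     (rho_TH <= rho k ->
        x k.+1 = Retr (x k) (eta k) /\ sigma k.+1 = sigma k / gamma) /\
     (rho k < rho_TH -> x k.+1 = x k /\ sigma k.+1 = gamma * sigma k)) ->
  (* (A1) *)
  (forall k, (k <= N)%N ->
     `| f (Retr (x k) (eta k)) - f (x k)
        - dotv (grad0 (fun v => f (Retr (x k) v))) (eta k)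
        - 2^-1 * qform (hess0 (fun v => f (Retr (x k) v))) (eta k) |
     <= 2^-1 * L_H * enorm (eta k) ^+ 3) ->
  (* (A2) *)
  (forall k, (k <= N)%N -> opnorm (H k) <= K_H) ->
  (* (A3) *)
  (forall k, (k <= N)%N ->
     enorm (G k - grad0 (fun v => f (Retr (x k) v))) <= delta_g /\
     enorm (opapp (H k - hess0 (fun v => f (Retr (x k) v))) (eta k))
       <= delta_H * enorm (eta k)) ->
  (* (A4) : Cauchy point *)
  (forall k, (k <= N)%N ->
     exists alphaC, is_argmin_ray (G k) (H k) (sigma k) (- G k) alphaC /\
       - cmodel (G k) (H k) (sigma k) (alphaC *: (- G k))
         <= - cmodel (G k) (H k) (sigma k) (eta k)) ->
  (* (A4) : eigenpoint *)
  (forall k, (k <= N)%N -> lam_min (H k) < 0 ->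
     exists u alphaE,
       qform (H k) u <= nu * lam_min (H k) * enorm u ^+ 2 /\
       nu * lam_min (H k) * enorm u ^+ 2 < 0 /\
       dotv (G k) u <= 0 /\
       is_argmin_ray (G k) (H k) (sigma k) u alphaE /\
       - cmodel (G k) (H k) (sigma k) (alphaE *: u)
         <= - cmodel (G k) (H k) (sigma k) (eta k)) ->
  (* accuracy conditions *)
  (forall k, (k <= N)%N ->
     delta_g <= 9 * delta_H ^+ 2 / (4 * sigma k) /\
     delta_H <= Num.min
       (Num.min (18^-1) ((1 - rho_TH) / 9)
          * (Num.sqrt (K_H ^+ 2 + 4 * sigma k * eps_g) - K_H))
       (Num.min (9^-1) (2 * (1 - rho_TH) / 9) * nu * eps_H)) ->
  (* f attains its minimum fmin *)
  (exists y, f y = fmin) -> (forall y, fmin <= f y) ->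
  let kappa_sigma :=
    Num.min (nu ^+ 3 / (24 * gamma ^+ 2 * L_H ^+ 2))
      ((2 * Num.sqrt 3)^-1 *
         Num.min (K_H^-1) ((Num.sqrt (2 * gamma * L_H))^-1)) in
  (#|[set k : 'I_N.+1 | rho_TH <= rho k]|)%:R
    <= (f x0 - fmin) / (rho_TH * kappa_sigma)
         * Num.max (eps_g ^- 2) (eps_H ^- 3) + 1.
Proof.
move=> n0 hR0 hC2 /andP[eg0 eg1] /andP[eH0 eH1] /andP[r0 r1] g1 s0 /andP[nu0 nu1]
  L0 K0 /andP[dg0 dg1] /andP[dH0 dH1] hs0 hx0 hsig0 f rho hAlg hA1 hA2 hA3 hC hE
  hacc _ hmin.
rewrite [in X in is_true X]/=.
set kappa := Num.min (nu ^+ 3 / _) _.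
set S := 2 * gamma * L_H.
have S0 : 0 < S by rewrite /S; apply: mulr_gt0 => //; lra.
set mm := fun k => - cmodel (G k) (H k) (sigma k) (eta k).
set mn := Num.min (eps_g ^+ 2) (eps_H ^+ 3).
have mn0 : 0 < mn by rewrite /mn lt_min !exprn_gt0.
have kap0 : 0 < kappa.
  rewrite /kappa lt_min; apply/andP; split.
    apply: divr_gt0; first exact: exprn_gt0.
    by apply: mulr_gt0; [apply: mulr_gt0; [lra| apply: exprn_gt0; lra]| exact: exprn_gt0].
  apply: mulr_gt0; first by rewrite invr_gt0 mulr_gt0 // sqrtr_gt0.
  by rewrite lt_min !invr_gt0 K0 sqrtr_gt0.
have hD : forall k, (k <= N)%N -> 0 < sigma k ->
  (eps_g < enorm (G k) /\ forall r, 0 <= r ->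
       r * enorm (G k) - K_H * r ^+ 2 / 2 - sigma k * r ^+ 3 / 3 <= mm k)
  \/ (eps_H < - lam_min (H k) /\
       nu ^+ 3 * (- lam_min (H k)) ^+ 3 / 6 <= sigma k ^+ 2 * mm k).
  move=> k kN sk0.
  have [_ [hnt _]] := hAlg k kN.
  case: (lerP (enorm (G k)) eps_g) => hg.
    have hl : lam_min (H k) < - eps_H.
      by rewrite ltNge; apply/negP => hl; apply: hnt.
    right; split; first by rewrite ltrNr.
    have hl0 : lam_min (H k) < 0 by apply: lt_trans hl _; rewrite oppr_lt0.
    have [u [aE [q1 [q2 [q3 [q4 q5]]]]]] := hE k kN hl0.
    exact: (eig_vec sk0 nu0 hl0 q1 q2 q3 q4 q5).
  left; split => //.
  apply: cauchy_vec => //; [exact: hA2| exact: lt_trans hg| exact: hC].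
have hK : forall k, (k <= N)%N -> 0 < sigma k -> sigma k <= S ->
  [/\ 0 < mm k, kappa * mn <= mm k & (2 * L_H <= sigma k -> rho_TH <= rho k)].
  move=> k kN sk0 skS.
  have hdec : kappa * mn <= mm k.
    case: (hD k kN sk0) => [[hg hr]|[hl he]].
      have := cauchy_dec K0 S0 sk0 skS eg0 (ltW eg1) hg hr.
      apply: le_trans; apply: ler_pM.
      - exact: ltW.
      - exact: ltW.
      - by rewrite /kappa ge_min lexx orbT.
      - by rewrite /mn ge_min lexx.
    have := eig_dec nu0 eH0 hl sk0 skS he.
    apply: le_trans; apply: ler_pM.
    - exact: ltW.
    - exact: ltW.
    - rewrite /kappa ge_min; apply/orP; left.
      by rewrite le_eqVlt; apply/orP; left; apply/eqP; rewrite /S; congr (_ / _); ring.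
    - by rewrite /mn ge_min lexx orbT.
  have mm0 : 0 < mm k by apply: lt_le_trans hdec; exact: mulr_gt0.
  split => // hL.
  have [hA3a hA3b] := hA3 k kN.
  have [hacc1 hacc2] := hacc k kN.
  have e1 := err_vec (sigma k) (hA1 k kN) hA3a hA3b.
  have e2 := err_bound sk0 hL (ltW dH0) (enorm_ge0 (eta k)) hacc1.
  have e3 : 16 * delta_H ^+ 3 <= (1 - rho_TH) * (sigma k ^+ 2 * mm k).
    case: (hD k kN sk0) => [[hg hr]|[hl he]].
      have := cauchy_succ sk0 K0 eg0 hg hr.
      have a0 : 0 <= Num.sqrt (K_H ^+ 2 + 4 * sigma k * eps_g) - K_H.
        have : Num.sqrt (K_H ^+ 2) <= Num.sqrt (K_H ^+ 2 + 4 * sigma k * eps_g).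
          by apply: ler_wsqrtr; rewrite lerDl; apply: mulr_ge0; [apply: mulr_ge0|]; lra.
        by rewrite sqrtr_sqr ger0_norm ?(ltW K0) // subr_ge0.
      move=> h; apply: (cauchy_dec_succ a0 _ (ltW dH0) h).
        by rewrite r0 r1.
      by move: hacc2; rewrite le_min => /andP[].
    apply: (eig_dec_succ nu0 eH0 hl sk0 _ (ltW dH0) he).
      by rewrite r0 r1.
    by move: hacc2; rewrite le_min => /andP[].
  have e4 : sigma k ^+ 2 * (f (Retr (x k) (eta k)) - f (x k) + mm k)
            <= sigma k ^+ 2 * ((1 - rho_TH) * mm k).
    have e4a : sigma k ^+ 2 * (f (Retr (x k) (eta k)) - f (x k) + mm k) <=
      sigma k ^+ 2 * (L_H / 2 * enorm (eta k) ^+ 3 + delta_g * enorm (eta k) +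
        delta_H * enorm (eta k) ^+ 2 / 2 - sigma k / 3 * enorm (eta k) ^+ 3).
      by apply: ler_wpM2l; [exact: sqr_ge0| rewrite /mm; lra].
    by rewrite mulrCA; apply: le_trans e4a (le_trans e2 e3).
  rewrite ler_pM2l ?exprn_gt0 // in e4.
  rewrite /rho ler_pdivlMr //; rewrite /mm in e4 mm0 *; lra.
have hsig : forall k, (k <= N)%N -> 0 < sigma k /\ sigma k <= S.
  elim=> [_|k IH kN]; first by rewrite hsig0; split.
  have kN' : (k <= N)%N by apply: ltnW.
  have [sk0 skS] := IH kN'.
  have [_ [_ [hs hu]]] := hAlg k kN'.
  have [_ _ hsucc] := hK k kN' sk0 skS.
  case: (lerP rho_TH (rho k)) => hr.
    have [_ ->] := hs hr.
    split; first by apply: divr_gt0 => //; lra.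
    apply: le_trans skS; rewrite ler_pdivrMr; [nra| lra].
  have [_ ->] := hu hr.
  have hl : sigma k < 2 * L_H.
    by rewrite ltNge; apply/negP => h; move: (hsucc h); rewrite leNgt hr.
  split; first by apply: mulr_gt0 => //; lra.
  rewrite /S; nra.
set b := fun k : nat => if rho_TH <= rho k then 1 else 0 : R.
set Dm := rho_TH * (kappa * mn).
have Dm0 : 0 < Dm by apply: mulr_gt0 => //; exact: mulr_gt0.
have htel : forall m, (m <= N.+1)%N -> f (x m) + Dm * \sum_(k < m) b k <= f x0.
  elim=> [_|m IH mN]; first by rewrite big_ord0 mulr0 addr0 hx0.
  have mN' : (m <= N)%N by rewrite ltnS in mN.
  have := IH (ltnW mN); rewrite big_ord_recr /=.
  have [sk0 skS] := hsig m mN'.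
  have [mm0 hdec _] := hK m mN' sk0 skS.
  have [_ [_ [hs hu]]] := hAlg m mN'.
  rewrite /b; case: (lerP rho_TH (rho m)) => hr.
    have [-> _] := hs hr.
    have h1 : rho_TH * mm m <= f (x m) - f (Retr (x m) (eta m)).
      by move: hr; rewrite /rho ler_pdivlMr // mulrC.
    have h2 : Dm <= rho_TH * mm m by apply: ler_wpM2l => //; exact: ltW.
    rewrite mulrDr mulr1; lra.
  by have [-> _] := hu hr; rewrite addr0.
have hcard : (#|[set k : 'I_N.+1 | rho_TH <= rho k]|)%:R = \sum_(k < N.+1) b k.
  rewrite -sum1_card natr_sum big_mkcond /=; apply: eq_bigr => k _.
  rewrite /b; case: (lerP rho_TH (rho k)) => h.
    by rewrite mem_set.
  by rewrite ifF //; apply/negP => /set_mem /=; rewrite leNgt h.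
rewrite hcard.
have hsum := htel N.+1 (leqnn _).
have fm := hmin (x N.+1).
set c := \sum_(k < N.+1) b k in hsum *.
have hc : c <= (f x0 - fmin) / Dm by rewrite ler_pdivlMr // mulrC; lra.
have -> : Num.max (eps_g ^- 2) (eps_H ^- 3) = mn^-1.
  rewrite /mn; case: (lerP (eps_g ^+ 2) (eps_H ^+ 3)) => h.
    by rewrite max_l // lef_pV2 ?posrE ?exprn_gt0.
  rewrite max_r // lef_pV2 ?posrE ?exprn_gt0 //; exact: ltW.
have -> : (f x0 - fmin) / (rho_TH * kappa) * mn^-1 = (f x0 - fmin) / Dm.
  by rewrite /Dm; field; rewrite ?gt_eqF ?mulf_neq0 ?gt_eqF.
lra.
Qed.
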